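(* Let $\dot G$ be a connected, non-complete, $5$-regular and $3$ net-regular SRSG belonging to $\mathcal C_1\cup\mathcal C_4\cup\mathcal C_5$ that contains no unbalanced triangle. Then $\dot G$ is isomorphic to $\dot S^2_{10}$ (parameters $(10,5,0,0,1)$) or to $\dot S^3_{10}$ (parameters $(10,5,3,0,-2)$).
   Context: A signed graph $\dot G=(G,\sigma)$ is a simple graph $G$ with $\sigma:E(G)\to\{\pm1\}$; adjacency matrix $A_{\dot G}$ has entries $\sigma(v_iv_j)$ for adjacent vertices, $0$ otherwise. Degree and connectedness refer to $G$; net-degree is $d^+(v)-d^-(v)$ (numbers of positive minus negative incident edges); $\rho$ net-regular means all net-degrees equal $\rho$. A triangle is unbalanced if the product of its edge signs is $-1$. $\dot G$ on $n$ vertices is an SRSG if it is neither homogeneous (all edges of one sign) complete nor edgeless and there are $r\in\mathbb N$, $a,b,c\in\mathbb Z$ with $(A^2_{\dot G})_{ii}=r$, $(A^2_{\dot G})_{ij}=a$ for positive edges, $b$ for negative edges, $c$ for distinct non-adjacent pairs; parameters $(n,r,a,b,c)$. Classes of inhomogeneous SRSGs: $\mathcal C_1$: $a=-b$ and (complete, or non-complete with $c\ne0$); $\mathcal C_4$: $a\ne-b$, non-complete, $c=0$; $\mathcal C_5$: $a\neq -b$, non-complete, $c\notin\{0,\frac{a+b}2\}$. $\dot S^2_{10}$ is $K_{5,5}$ with the edges of a perfect matching negative and all other edges positive. $\dot S^3_{10}$ is the union of two vertex-disjoint all-positive copies of $K_5$ on $\{u_1,\dots,u_5\}$ and $\{w_1,\dots,w_5\}$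 together with negative edges $u_tw_t$, $t=1,\dots,5$. *)

(* Defs.v *)
(* A x y = 1 : positive edge, -1 : negative edge,
   0 : non-adjacent. *)
From mathcomp Require Import all_boot all_order all_algebra.
Set Implicit Arguments. Unset Strict Implicit. Unset Printing Implicit Defensive.
Import Order.TTheory GRing.Theory Num.Theory.
Local Open Scope ring_scope.

Section SignedGraphs.
Variable T : finType.
Variable A : T -> T -> int.

Definition signed_graph : Prop :=
  [/\ forall x, A x x = 0,
      forall x y, A x y = A y x &
      forall x y, A x y \in [:: -1; 0; 1]].

Definition adjacent (x y : T) : bool := A x y != 0.

Definition A2 (x y : T) : int := \sum_(z : T) A x z * A z y.

Definition degree (x : T) : nat := #|[set y | adjacent x y]|.
Definition net_degree (x : T) : int := \sum_(y : T) A x y.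

Definition regular (k : nat) : Prop := forall x, degree x = k.
Definition net_regular (rho : int) : Prop := forall x, net_degree x = rho.

Definition sg_connected : Prop :=
  forall x y, connect (fun u v => adjacent u v) x y.

Definition complete : Prop := forall x y, x != y -> adjacent x y.
Definition edgeless : Prop := forall x y, A x y = 0.
Definition homogeneous : Prop :=
  (forall x y, A x y != -1) \/ (forall x y, A x y != 1).

Definition is_SRSG (n r : nat) (a b c : int) : Prop :=
  [/\ #|T| = n,
      ~ (homogeneous /\ complete),
      ~ edgeless &
      [/\ (forall x, A2 x x = r%:Z),
          (forall x y, A x y = 1 -> A2 x y = a),
          (forall x y, A x y = -1 -> A2 x y = b) &
          (forall x y, x != y -> A x y = 0 -> A2 x y = c)]].

Definition class_C1 (a b c : int) : Prop :=
  ~ homogeneous /\ a = - b /\ (complete \/ (~ complete /\ c != 0)).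
Definition class_C4 (a b c : int) : Prop :=
  ~ homogeneous /\ a != - b /\ ~ complete /\ c = 0.
Definition class_C5 (a b c : int) : Prop :=
  ~ homogeneous /\ a != - b /\ ~ complete /\ c != 0 /\ 2 * c != a + b.

Definition unbalanced_triangle (x y z : T) : Prop :=
  [/\ adjacent x y, adjacent y z, adjacent z x & A x y * A y z * A z x = -1].

Definition no_unbalanced_triangle : Prop :=
  forall x y z, ~ unbalanced_triangle x y z.

End SignedGraphs.

Definition sg_iso (T U : finType) (A : T -> T -> int) (B : U -> U -> int) : Prop :=
  exists f : T -> U, bijective f /\ forall x y, B (f x) (f y) = A x y.

(* Vertex set of the two examples: bool * 'I_5; (false, t) = u_t, (true, t) = w_t *)
Definition V10 := (bool * 'I_5)%type.

(* S^2_10 : K_{5,5} (parts u, w), matching u_t w_t negative, other edges positive *)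
Definition S2_10 (p q : V10) : int :=
  if p.1 == q.1 then 0 else if p.2 == q.2 then -1 else 1.

(* S^3_10 : two positive K_5's on u's and w's, plus negative edges u_t w_t *)
Definition S3_10 (p q : V10) : int :=
  if p.1 == q.1 then (if p.2 == q.2 then 0 else 1)
  else (if p.2 == q.2 then -1 else 0).

(* Main.v *)
Require Import Defs.
From mathcomp Require Import all_boot all_order all_algebra.
From mathcomp Require Import zify ring lra.
Set Implicit Arguments. Unset Strict Implicit. Unset Printing Implicit Defensive.
Import Order.TTheory GRing.Theory Num.Theory.
Local Open Scope ring_scope.

Lemma sum_ind (T : finType) (P : pred T) :
  \sum_(y : T) ((P y)%:R : int) = #|[set y | P y]|%:R.
Proof.
rewrite (eq_bigr (fun y => if P y then 1 else 0)); last by move=> y _; case: (P y).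
rewrite -big_mkcond /= sumr_const.
by rewrite (eq_card (B:=P)) // => y; rewrite inE.
Qed.

Lemma iso_build (T : finType) (A : T -> T -> int) (B : V10 -> V10 -> int)
  (h : V10 -> T) : injective h -> #|T| = 10%N ->
  (forall p q, A (h p) (h q) = B p q) -> sg_iso A B.
Proof.
move=> hinj cT hAB.
have : bijective h.
  by apply: inj_card_bij => //; rewrite cT card_prod card_bool card_ord.
case=> g hg gh; exists g; split; first by exists h.
by move=> x y; rewrite -hAB !gh.
Qed.

Lemma enum5 (T : finType) (U : {set T}) : #|U| = 5%N ->
  exists u : 'I_5 -> T, injective u /\ forall t, u t \in U.
Proof.
move=> cU; exists (fun t => enum_val (cast_ord (esym cU) t)); split.
  by move=> s t /enum_val_inj /cast_ord_inj.
by move=> t; apply: enum_valP.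
Qed.

Lemma trB k (X Y : 'M[int]_k.+1) : \tr (X - Y) = \tr X - \tr Y.
Proof. by rewrite /mxtrace -sumrB; apply: eq_bigr => i _; rewrite !mxE. Qed.
Lemma trD k (X Y : 'M[int]_k.+1) : \tr (X + Y) = \tr X + \tr Y.
Proof. by rewrite /mxtrace -big_split; apply: eq_bigr => i _; rewrite !mxE. Qed.
Lemma trN k (X : 'M[int]_k.+1) : \tr (- X) = - \tr X.
Proof. by rewrite /mxtrace -sumrN; apply: eq_bigr => i _; rewrite !mxE. Qed.
Lemma trMn k (X : 'M[int]_k.+1) n : \tr (X *+ n) = \tr X *+ n.
Proof. by rewrite /mxtrace -sumrMnl; apply: eq_bigr => i _; rewrite mulmxnE. Qed.
Lemma trMnat k (X : 'M[int]_k.+1) (c : nat) : \tr (c%:R * X) = \tr X *+ c.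
Proof. by rewrite mulr_natl trMn. Qed.

Section Basics.
Variable T : finType.
Variable A : T -> T -> int.
Hypothesis sgA : signed_graph A.
Hypothesis reg5 : regular A 5.
Hypothesis net3 : net_regular A 3.
Hypothesis notri : no_unbalanced_triangle A.

Lemma Adiag x : A x x = 0. Proof. by case: sgA. Qed.
Lemma Asym x y : A x y = A y x. Proof. by case: sgA. Qed.
Lemma Avals x y : [\/ A x y = -1, A x y = 0 | A x y = 1].
Proof.
case: sgA => _ _ /(_ x y); rewrite !inE => /or3P[] /eqP ->.
- by constructor 1. - by constructor 2. - by constructor 3.
Qed.

Definition pos x := [set y | A x y == 1].
Definition neg x := [set y | A x y == -1].

Lemma card_pos_neg x : #|pos x| = 4%N /\ #|neg x| = 1%N.
Proof.
have h1 : net_degree A x = #|pos x|%:R - #|neg x|%:R.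
  rewrite /net_degree /pos /neg -!sum_ind -sumrB; apply: eq_bigr => y _.
  by case: (Avals x y) => ->.
have h2 : (degree A x)%:R = #|pos x|%:R + #|neg x|%:R :> int.
  rewrite /pos /neg -!sum_ind -big_split /=.
  transitivity (\sum_y ((adjacent A x y)%:R : int)); first by rewrite sum_ind.
  apply: eq_bigr => y _.
  by rewrite /adjacent; case: (Avals x y) => ->.
rewrite net3 in h1; rewrite reg5 in h2.
lia.
Qed.


Definition m x := odflt x [pick y | A x y == -1].

Lemma mP x : A x (m x) = -1.
Proof.
rewrite /m; case: pickP => [y /eqP //|H].
have := (card_pos_neg x).2; rewrite /neg.
by rewrite (eq_card (B := pred0)) ?card0 // => y; rewrite inE H.
Qed.

Lemma m_uniq x y : A x y = -1 -> y = m x.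
Proof.
move=> Hy; have := (card_pos_neg x).2 => /eqP/cards1P[z Hz].
have : y \in neg x by rewrite inE Hy.
have : m x \in neg x by rewrite inE mP.
by rewrite Hz !inE => /eqP -> /eqP.
Qed.

Lemma mm x : m (m x) = x.
Proof. by apply/esym/m_uniq; rewrite Asym mP. Qed.

Lemma m_inj : injective m.
Proof. by move=> x y H; rewrite -(mm x) H mm. Qed.

Lemma m_neq x : m x != x.
Proof. by apply/eqP=> H; have := mP x; rewrite H Adiag. Qed.

Lemma neg_other x y z : A x y = -1 -> A x z != 0 -> z != y -> A x z = 1.
Proof.
move=> Hy Hz Hzy; case: (Avals x z) => // [H|]; last by move=> H; rewrite H in Hz.
by move: Hzy; rewrite (m_uniq H) -(m_uniq Hy) eqxx.
Qed.

Lemma tri1 x y z : A x y = -1 -> A y z != 0 -> A z x != 0 -> False.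
Proof.
move=> Hxy Hyz Hzx.
have zx : z != x by apply: contraNneq Hzx => ->; rewrite Adiag.
have zy : z != y by apply: contraNneq Hyz => ->; rewrite Adiag.
have H1 : A y z = 1 by apply: (neg_other (y:=x)); rewrite // Asym.
have H2 : A z x = 1 by rewrite Asym; apply: (neg_other (y:=y)); rewrite // Asym.
apply: (notri (x:=x) (y:=y) (z:=z)); split; rewrite /adjacent ?Hxy ?H1 ?H2 //.
Qed.

Lemma tri x y z : A x y != 0 -> A y z != 0 -> A z x != 0 ->
  [/\ A x y = 1, A y z = 1 & A z x = 1].
Proof.
move=> H1 H2 H3.
have E u v w : A u v != 0 -> A v w != 0 -> A w u != 0 -> A u v = 1.
  move=> h1 h2 h3; case: (Avals u v) => // [h|h]; last by rewrite h in h1.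
  by case: (tri1 h h2 h3).
by split; [apply: (E _ _ z)|apply: (E _ _ x)|apply: (E _ _ y)].
Qed.

Lemma negprod x y z : A x y = -1 -> A x z * A z y = 0.
Proof.
move=> H; apply/eqP; rewrite mulf_eq0; apply/orP.
case: (boolP (A x z == 0)) => [|h1]; first by left.
case: (boolP (A z y == 0)) => [|h2]; first by right.
have h3 : A y x != 0 by rewrite Asym H.
by case: (tri h1 h2 h3) => _ _; rewrite Asym H.
Qed.

Lemma posprod x y z : A x y = 1 ->
  A x z * A z y = ((A x z == 1) && (A z y == 1))%:R.
Proof.
move=> H.
case: (boolP (A x z == 0)) => [/eqP->|h1]; first by rewrite mul0r; case: eqP.
case: (boolP (A z y == 0)) => [/eqP->|h2]; first by rewrite mulr0 andbF.
have h3 : A y x != 0 by rewrite Asym H.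
by case: (tri h1 h2 h3) => -> ->.
Qed.

Definition C x y := [set z | (A x z == 1) && (A z y == 1)].

Lemma A2_pos x y : A x y = 1 -> A2 A x y = #|C x y|%:R.
Proof.
move=> H; rewrite /A2 /C -sum_ind; apply: eq_bigr => z _; exact: posprod.
Qed.

Lemma A2_neg x y : A x y = -1 -> A2 A x y = 0.
Proof. move=> H; rewrite /A2 big1 // => z _; exact: negprod. Qed.

Lemma A2_diag x : A2 A x x = 5.
Proof.
have := reg5 x; rewrite /degree => H.
rewrite /A2; transitivity (\sum_y ((adjacent A x y)%:R : int)).
  by apply: eq_bigr => y _; rewrite /adjacent (Asym y x); case: (Avals x y) => ->.
by rewrite sum_ind H.
Qed.

Lemma C_sub x y : A x y = 1 -> C x y \subset pos x :\ y.
Proof.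
move=> H; apply/subsetP => z; rewrite !inE => /andP[/eqP h1 /eqP h2].
by rewrite h1 eqxx andbT; apply: contra_eqN h2 => /eqP ->; rewrite Adiag.
Qed.

Lemma card_C x y : A x y = 1 -> (#|C x y| <= 3)%N.
Proof.
move=> H; have := subset_leq_card (C_sub H).
have := cardsD1 y (pos x); rewrite (card_pos_neg x).1 !inE H eqxx /=.
by move=> [->].
Qed.

Lemma sumA2 x : \sum_y A2 A x y = 9.
Proof.
rewrite /A2 exchange_big /=.
rewrite (eq_bigr (fun z => A x z * 3)); last first.
  by move=> z _; rewrite -mulr_sumr; have := net3 z; rewrite /net_degree => ->.
by rewrite -mulr_suml; have := net3 x; rewrite /net_degree => ->.
Qed.

Definition Z x := [set y | (y != x) && (A x y == 0)].

Lemma cardZ x : #|T| = (6 + #|Z x|)%N.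
Proof.
suff : (#|T|%:R : int) = 6 + #|Z x|%:R by lia.
have e1 : \sum_(y : T) (((y == x) : bool)%:R : int) = 1.
  by rewrite sum_ind (eq_card (B := pred1 x)) ?card1 // => y; rewrite inE.
have e2 : \sum_(y : T) ((adjacent A x y)%:R : int) = 5.
  by rewrite sum_ind; have := reg5 x; rewrite /degree => ->.
transitivity (\sum_(y : T) ((((y == x) : bool)%:R : int) + (adjacent A x y)%:R
   + ((y != x) && (A x y == 0))%:R)).
  rewrite [in RHS](eq_bigr (fun _ => 1)) ?sumr_const // ?cardT.
  move=> y _; case: (eqVneq y x) => [->|yx]; first by rewrite /adjacent Adiag.
  by rewrite /adjacent /=; case: (A x y == 0).
by rewrite !big_split /= e1 e2 sum_ind.
Qed.

Lemma eqn (a c : int) x :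
  (forall u v, A u v = 1 -> A2 A u v = a) ->
  (forall u v, u != v -> A u v = 0 -> A2 A u v = c) ->
  4 * a + c * #|Z x|%:R = 4.
Proof.
move=> Ha Hc.
have : \sum_y A2 A x y = 5 + a * 4 + c * #|Z x|%:R.
  transitivity (\sum_y ((((y == x) : bool)%:R * 5 : int) + ((A x y == 1)%:R * a)
       + ((y != x) && (A x y == 0))%:R * c)).
    apply: eq_bigr => y _; case: (eqVneq y x) => [->|yx] /=.
      by rewrite A2_diag Adiag /=; ring.
    case: (Avals x y) => H; rewrite H /=.
    - by rewrite A2_neg //=; ring.
    - by rewrite Hc //=; [ring | rewrite eq_sym].
    - by rewrite Ha //=; ring.
  rewrite !big_split /= -!mulr_suml !sum_ind.
  have -> : #|[set y | y == x]| = 1%N.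
    by rewrite (eq_card (B := pred1 x)) ?card1 // => y; rewrite inE.
  have := (card_pos_neg x).1; rewrite /pos => ->.
  by rewrite /Z; ring.
rewrite sumA2; lia.
Qed.

Lemma sum_negv v : \sum_z (((A z v == -1) : bool)%:R : int) = 1.
Proof.
rewrite sum_ind; suff -> : #|[set z | A z v == -1]| = #|neg v|.
  by rewrite (card_pos_neg v).2.
by apply: eq_card => z; rewrite !inE Asym.
Qed.

Lemma sum_negu u : \sum_z (((A u z == -1) : bool)%:R : int) = 1.
Proof. by rewrite sum_ind; have := (card_pos_neg u).2; rewrite /neg => ->. Qed.

Lemma A2_lb u v (E : {set T}) :
  (forall z, z \in E -> A u z = 1 /\ A z v = 1) -> #|E|%:R - 2 <= A2 A u v.
Proof.
move=> HE.
have -> : (#|E|%:R - 2 : int) = \sum_z (((z \in E) : bool)%:R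
      - ((A u z == -1) : bool)%:R - ((A z v == -1) : bool)%:R).
  rewrite !sumrB sum_negv sum_negu sum_ind.
  have -> : #|[set z | z \in E]| = #|E| by apply: eq_card => z; rewrite inE.
  ring.
rewrite /A2; apply: ler_sum => z _.
case: (boolP (z \in E)) => zE.
  by case: (HE z zE) => -> ->.
by case: (Avals u z) => ->; case: (Avals z v) => ->.
Qed.

Lemma case_a2 (x : T) : (forall u v, A u v = 1 -> #|C u v| = 2%N) ->
  exists y1 y3, [/\ y1 != y3, A y1 y3 = 0 & 1 <= A2 A y1 y3].
Proof.
move=> Ha.
have : (0 < #|pos x|)%N by rewrite (card_pos_neg x).1.
case/card_gt0P => y1 y1P; have Hy1 : A x y1 = 1 by move: y1P; rewrite inE => /eqP.
have Cs1 := C_sub Hy1.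
have cD1 : #|pos x :\ y1| = 3%N.
  by have := cardsD1 y1 (pos x); rewrite (card_pos_neg x).1 y1P => -[].
have : (0 < #|(pos x :\ y1) :\: C x y1|)%N.
  by rewrite cardsD (setIidPr Cs1) cD1 Ha.
case/card_gt0P => y3; rewrite !inE => /andP[nC /andP[y31 /eqP Hy3]].
have A31 : A y3 y1 != 1 by move: nC; rewrite Hy3 eqxx.
have A13 : A y1 y3 = 0.
  case: (Avals y1 y3) => // H; last by rewrite Asym H in A31.
  by case: (tri1 H (z := x)); rewrite ?Hy3 ?(Asym x y3) ?Hy1 // Asym Hy3.
set D := (pos x :\ y1) :\ y3.
have cD : #|D| = 2%N.
  have := cardsD1 y3 (pos x :\ y1); rewrite cD1 !inE y31 Hy3 eqxx /=.
  by move=> [].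
have eq1 : C x y1 = D.
  apply/eqP; rewrite eqEcard cD Ha // andbT; apply/subsetP => z zC.
  rewrite !inE; have := subsetP Cs1 z zC; rewrite !inE => /andP[-> ->].
  apply/andP; split => //; apply/eqP => zy; move: zC; by rewrite zy inE (negbTE nC).
have eq3 : C x y3 = D.
  apply/eqP; rewrite eqEcard cD Ha // andbT; apply/subsetP => z zC.
  have := subsetP (C_sub Hy3) z zC; rewrite !inE => /andP[-> ->].
  rewrite andbT; apply: contra_eqN A13 => /eqP zy1; move: zC.
  by rewrite inE zy1 => /andP[_ /eqP ->].
exists y1, y3; split; [by rewrite eq_sym | by [] |].
have xD : x \notin D by rewrite !inE Adiag !andbF.
have := A2_lb (u := y1) (v := y3) (E := x |: D).
rewrite cardsU1 xD cD; apply.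
move=> z; rewrite in_setU1 => /orP[/eqP ->|zD].
  by rewrite Asym Hy1 Hy3.
have : z \in C x y1 by rewrite eq1.
have : z \in C x y3 by rewrite eq3.
rewrite !inE => /andP[_ /eqP ->] /andP[_ /eqP h2].
by rewrite Asym.
Qed.

Section A3.
Hypothesis Ha3 : forall u v, A u v = 1 -> #|C u v| = 3%N.

Definition K x := x |: pos x.

Lemma clique3 x y z : A x y = 1 -> A x z = 1 -> y != z -> A y z = 1.
Proof.
move=> Hy Hz yz.
have e : C x y = pos x :\ y.
  apply/eqP; rewrite eqEcard C_sub // Ha3 //.
  by have := cardsD1 y (pos x); rewrite (card_pos_neg x).1 inE Hy eqxx /=; lia.
have : z \in C x y by rewrite e !inE Hz eqxx eq_sym yz.
by rewrite inE => /andP[_ /eqP]; rewrite Asym.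
Qed.

Lemma K_card x : #|K x| = 5%N.
Proof. by rewrite /K cardsU1 (card_pos_neg x).1 inE Adiag. Qed.

Lemma K_clique x y z : y \in K x -> z \in K x -> y != z -> A y z = 1.
Proof.
rewrite !inE => /orP[/eqP->|/eqP Hy] /orP[/eqP->|/eqP Hz] yz.
- by rewrite eqxx in yz.
- done.
- by rewrite Asym.
- exact: clique3 Hy Hz yz.
Qed.

Lemma K_self x : x \in K x. Proof. exact: setU11. Qed.

Lemma K_eq x y : y \in K x -> K y = K x.
Proof.
move=> yK; apply/esym/eqP; rewrite eqEcard !K_card leqnn andbT.
apply/subsetP => w wK; case: (eqVneq w y) => [->|wy]; first exact: K_self.
have Hw : A y w = 1 by apply: K_clique yK wK _; rewrite eq_sym.
by rewrite !inE Hw eqxx orbT.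
Qed.

Lemma K_disj x y : y \notin K x -> [disjoint K x & K y].
Proof.
move=> yK; apply/pred0P => w /=; apply/negP => /andP[w1 w2].
by move: yK; rewrite -(K_eq w1) (K_eq w2) K_self.
Qed.

Lemma adj_K x w : A x w != 0 -> w \in K x \/ w = m x.
Proof.
case: (Avals x w) => H hw.
- by right; apply: m_uniq.
- by rewrite H in hw.
- by left; rewrite !inE H eqxx orbT.
Qed.

Lemma my_props x y : A x y = 1 -> x != m y /\ A x (m y) = 0.
Proof.
move=> H; split.
  apply/eqP => e; have e2 : y = m x by rewrite e mm.
  by have := mP x; rewrite -e2 H.
case: (boolP (A x (m y) == 0)) => [/eqP//|h].
by case: (tri1 (mP y) (z := x)); rewrite ?H // Asym.
Qed.

Lemma c_formula x y : A x y = 1 -> A2 A x (m y) = -1 - A (m x) (m y).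
Proof.
move=> H; rewrite /A2 (bigD1 (m x)) //= (bigD1 y) /=; last first.
  by apply/eqP => e; have := mP x; rewrite -e H.
rewrite big1 ?addr0; last first.
  move=> z /andP[zmx zy].
  case: (boolP (A x z == 0)) => [/eqP->|h]; first by rewrite mul0r.
  have Hz : A x z = 1 by case: (adj_K h) => [|e]; [rewrite !inE => /orP[/eqP e|/eqP//]; move: h; rewrite e Adiag eqxx | by rewrite e eqxx in zmx].
  have Hzy : A z y = 1 by exact: clique3 Hz H zy.
  case: (boolP (A z (m y) == 0)) => [/eqP->|h2]; first by rewrite mulr0.
  by case: (tri1 (mP y) (z := z)); rewrite ?Hzy // Asym.
by rewrite !mP H; ring.
Qed.

Lemma card_U0 (U V : {set T}) : [disjoint U & V] -> #|U :|: V| = (#|U| + #|V|)%N.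
Proof. by move=> d; rewrite cardsU disjoint_setI0 // cards0 subn0. Qed.

Lemma a3_main (c : int) (x0 : T) :
  (forall u v, u != v -> A u v = 0 -> A2 A u v = c) ->
  12 + c * #|Z x0|%:R = 4 -> c = -2 /\ #|T| = 10%N /\ sg_iso A S3_10.
Proof.
move=> Hc He.
have : (0 < #|pos x0|)%N by rewrite (card_pos_neg x0).1.
case/card_gt0P => y0; rewrite inE => /eqP H0.
have cf u v : A u v = 1 -> c = -1 - A (m u) (m v).
  by move=> Huv; have [n1 n2] := my_props Huv; rewrite -(Hc _ _ n1 n2) c_formula.
have cT := cardZ x0.
have mx0K : m x0 \notin K x0.
  by rewrite !inE mP negb_or m_neq.
case: (Avals (m x0) (m y0)) => Hm.
- by move: He; rewrite (cf _ _ H0) Hm; lia.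
- exfalso; move: He; rewrite (cf _ _ H0) Hm => He.
  have cZ : #|Z x0| = 8%N by lia.
  have [n1 n2] := my_props H0.
  have d1 : [disjoint K x0 & K (m x0)] by apply: K_disj.
  have d2 : [disjoint K x0 & K (m y0)].
    by apply: K_disj; rewrite !inE n2 negb_or; apply/andP; split => //; rewrite eq_sym.
  have d3 : [disjoint K (m x0) & K (m y0)].
    apply: K_disj; rewrite !inE Hm /= orbF; apply/eqP => /m_inj e.
    by move: H0; rewrite e Adiag.
  have := max_card (mem (K x0 :|: K (m x0) :|: K (m y0))).
  rewrite cardsU setIUl (disjoint_setI0 d2) (disjoint_setI0 d3) setU0 cards0 subn0.
  by rewrite card_U0 // !K_card cT cZ.
have c2 : c = -2 by rewrite (cf _ _ H0) Hm.
have cZ : #|Z x0| = 4%N by move: He; rewrite c2; lia.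
have cT10 : #|T| = 10%N by rewrite cT cZ.
split=> //; split=> //.
have mm1 u v : A u v = 1 -> A (m u) (m v) = 1.
  by move=> Huv; have := cf _ _ Huv; rewrite c2; lia.
have d1 : [disjoint K x0 & K (m x0)] by apply: K_disj.
have [u [uinj uK]] := enum5 (K_card x0).
have muK t : m (u t) \in K (m x0).
  have := uK t; rewrite !inE => /orP[/eqP->|/eqP h]; first by rewrite eqxx.
  by rewrite mm1 // eqxx orbT.
have dd t s : u t != m (u s).
  apply/eqP => e; move: (disjointFr d1 (uK t)); rewrite e muK //.
pose h (p : V10) := if p.1 then m (u p.2) else u p.2.
apply: (iso_build (h := h)) => //.
  move=> [[] s] [[] t]; rewrite /h /=.
  - by move/m_inj/uinj => ->.
  - by move=> e; move: (dd t s); rewrite e eqxx.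
  - by move=> e; move: (dd s t); rewrite e eqxx.
  - by move/uinj => ->.
have cl U y z : y \in K U -> z \in K U -> A y z = (y != z)%:R.
  move=> yK zK; case: (eqVneq y z) => [->|yz]; first by rewrite Adiag.
  exact: K_clique yK zK yz.
have cross s t : A (u s) (m (u t)) = if s == t then -1 else 0.
  case: (eqVneq s t) => [->|st]; first exact: mP.
  case: (boolP (A (u s) (m (u t)) == 0)) => [/eqP //|h1].
  case: (adj_K h1) => [|/m_inj/uinj e]; last by rewrite e eqxx in st.
  rewrite (K_eq (uK s)) => e; move: (dd s t).
  by move: (disjointFr d1 e); rewrite muK.
move=> [[] s] [[] t]; rewrite /h /S3_10 /=.
- by rewrite (cl _ _ _ (muK s) (muK t)) (inj_eq m_inj) (inj_eq uinj); case: eqP.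
- by rewrite Asym cross eq_sym.
- by rewrite cross.
- by rewrite (cl _ _ _ (uK s) (uK t)) (inj_eq uinj); case: eqP.
Qed.

End A3.

Section A0.
Hypothesis Ha0 : forall u v, A u v = 1 -> #|C u v| = 0%N.

Lemma trifree x y z : A x y != 0 -> A y z != 0 -> A z x != 0 -> False.
Proof.
move=> h1 h2 h3; have [e1 e2 e3] := tri h1 h2 h3.
have := Ha0 e1 => /eqP; rewrite cards_eq0 => /eqP C0.
have : z \in C x y by rewrite inE Asym e3 Asym e2 eqxx.
by rewrite C0 inE.
Qed.

Definition nbr x := [set y | adjacent A x y].

Lemma card_nbr x : #|nbr x| = 5%N. Proof. exact: reg5. Qed.

Lemma a0_main (c : int) (x0 : T) :
  (forall u v, u != v -> A u v = 0 -> A2 A u v = c) ->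
  c * #|Z x0|%:R = 4 -> c = 1 /\ #|T| = 10%N /\ sg_iso A S2_10.
Proof.
move=> Hc He.
have cT := cardZ x0.
set W := nbr x0.
have : (0 < #|W|)%N by rewrite card_nbr.
case/card_gt0P => y0; rewrite inE /adjacent => h0.
have d0 : [disjoint W & nbr y0].
  apply/pred0P => q /=; apply/negP; rewrite !inE /adjacent => /andP[h1 h2].
  by apply: (trifree h0 h2); rewrite Asym.
have := max_card (mem (W :|: nbr y0)).
rewrite card_U0 // !card_nbr cT => le10.
have z4 : (4 <= #|Z x0|)%N by lia.
set zz := #|Z x0| in He z4 cT *.
have cp : 0 < c.
  rewrite ltNge; apply/negP => cn.
  have : c * zz%:R <= 0 by rewrite mulr_le0_ge0.
  by rewrite He.
have zle : (zz <= 4)%N.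
  have : (zz%:R : int) <= c * zz%:R by rewrite ler_peMl // ?ler0n; lia.
  by rewrite He; lia.
have [c1 cZ] : c = 1 /\ zz = 4%N.
  have zz4 : zz = 4%N by lia.
  by split=> //; move: He; rewrite zz4; lia.
have cT10 : #|T| = 10%N by rewrite cT cZ.
split=> //; split; first by rewrite cZ.
have cU : #|~: W| = 5%N by have := cardsC W; rewrite card_nbr cT10 => /eqP; lia.
have nW w : w \in W -> nbr w = ~: W.
  move=> wW; apply/eqP; rewrite eqEcard card_nbr cU leqnn andbT.
  apply/subsetP => q; rewrite !inE /adjacent => h2; apply/negP => h3.
  move: h3 wW; rewrite ?inE /adjacent => h3 h1.
  by apply: (trifree h1 h2); rewrite Asym.
have nU v : v \notin W -> nbr v = W.
  move=> vW; apply/esym/eqP; rewrite eqEcard; apply/andP; split; last by rewrite !card_nbr.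
  apply/subsetP => w wW; move: (nW w wW) => /setP/(_ v).
  rewrite inE [v \in ~: W]inE vW /adjacent => h; by rewrite inE /adjacent Asym.
have adjW p q : (A p q != 0) = ((p \in W) != (q \in W)).
  case: (boolP (p \in W)) => pW.
    by move: (nW p pW) => /setP/(_ q); rewrite !inE /adjacent.
  by move: (nU p pW) => /setP/(_ q); rewrite [q \in nbr p]inE /adjacent => ->; case: (q \in W).
have [u [uinj uU]] := enum5 cU.
have muW t : m (u t) \in W.
  have := mP (u t); move: (uU t); rewrite inE => uW.
  move=> e; have : A (u t) (m (u t)) != 0 by rewrite e.
  by rewrite adjW (negbTE uW); case: (m (u t) \in W).
have dd t s : u t != m (u s).
  by apply/eqP => e; move: (uU t); rewrite e inE muW.
pose h (p : V10) := if p.1 then m (u p.2) else u p.2.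
apply: (iso_build (h := h)) => //.
  move=> [[] s] [[] t]; rewrite /h /=.
  - by move/m_inj/uinj => ->.
  - by move=> e; move: (dd t s); rewrite e eqxx.
  - by move=> e; move: (dd s t); rewrite e eqxx.
  - by move/uinj => ->.
have z0 p q : (p \in W) = (q \in W) -> A p q = 0.
  by move=> e; apply/eqP; rewrite -[_ == 0]negbK adjW e eqxx.
have cross s t : A (u s) (m (u t)) = if s == t then -1 else 1.
  case: (eqVneq s t) => [->|st]; first exact: mP.
  have : A (u s) (m (u t)) != 0.
    by rewrite adjW muW; move: (uU s); rewrite inE => /negbTE ->.
  case: (Avals (u s) (m (u t))) => H hh; [|by rewrite H in hh|by []].
  by move: (m_uniq H) => /m_inj/uinj e; rewrite e eqxx in st.
move=> [[] s] [[] t]; rewrite /h /S2_10 /=.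
- by rewrite z0 // !muW.
- by rewrite Asym cross eq_sym.
- by rewrite cross.
- by rewrite z0 //; move: (uU s) (uU t); rewrite !inE => /negbTE -> /negbTE ->.
Qed.

End A0.

Section A1.
Hypothesis Ha1 : forall u v, A u v = 1 -> #|C u v| = 1%N.
Hypothesis Hc0 : forall u v, u != v -> A u v = 0 -> A2 A u v = 0.

Definition P x y : int := ((A x y == 1) : bool)%:R.

Lemma Psym x y : P x y = P y x. Proof. by rewrite /P Asym. Qed.

Lemma Psum x : \sum_y P x y = 4.
Proof. by rewrite /P sum_ind; have := (card_pos_neg x).1; rewrite /pos => ->. Qed.

Lemma Ptri x y : P x y * \sum_z (P y z * P x z) = P x y.
Proof.
rewrite /P; case: (boolP (A x y == 1)) => [/eqP H|]; last by rewrite !mul0r.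
rewrite mul1r; transitivity (#|C x y|%:R : int); last by rewrite Ha1.
rewrite /C -sum_ind; apply: eq_bigr => z _.
by rewrite (Asym y z); case: (A x z == 1); case: (A z y == 1).
Qed.

Lemma A2form x y : A2 A x y = ((x == y) : bool)%:R * 5 + P x y.
Proof.
rewrite /P; case: (eqVneq x y) => [->|xy]; first by rewrite A2_diag Adiag.
case: (Avals x y) => H; rewrite H /=.
- by rewrite A2_neg //; ring.
- by rewrite Hc0 //; ring.
- by rewrite A2_pos // Ha1 //.
Qed.

Lemma Nsq x y : \sum_z ((A x z == -1) : bool)%:R * ((A z y == -1) : bool)%:R
   = ((x == y) : bool)%:R :> int.
Proof.
rewrite (bigD1 (m x)) //= big1 ?addr0.
  suff -> : (A (m x) y == -1) = (x == y) by rewrite mP eqxx mul1r.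
  apply/idP/idP => [/eqP/m_uniq|/eqP<-]; first by rewrite mm => ->.
  by rewrite Asym mP.
move=> z zm; case: (boolP (A x z == -1)) => [/eqP/m_uniq e|]; last by rewrite mul0r.
by rewrite e eqxx in zm.
Qed.

Lemma sum_swap12 (F : T -> T -> T -> int) :
  \sum_x \sum_y \sum_z F x y z = \sum_x \sum_y \sum_z F y x z.
Proof. by rewrite exchange_big. Qed.

Lemma sum_swap23 (F : T -> T -> T -> int) :
  \sum_x \sum_y \sum_z F x y z = \sum_x \sum_y \sum_z F x z y.
Proof. by apply: eq_bigr => x _; rewrite exchange_big. Qed.

Definition tt x y z := P x y * (P y z * P x z).

Lemma tt_rot x y z : tt x y z = tt z x y.
Proof. by rewrite /tt (Psym z x) (Psym z y); ring. Qed.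
Lemma tt_sw x y z : tt x y z = tt y x z.
Proof. by rewrite /tt (Psym y x); ring. Qed.
Lemma tt_sw23 x y z : tt x y z = tt x z y.
Proof. by rewrite /tt (Psym z y); ring. Qed.

Lemma PSD (w : T -> int) :
  0 <= \sum_x w x * \sum_y ((((x == y) : bool)%:R * 2 + P x y) * w y).
Proof.
have H : \sum_x \sum_y \sum_z tt x y z * (w x + w y + w z) ^+ 2 =
   6 * \sum_x w x * \sum_y ((((x == y) : bool)%:R * 2 + P x y) * w y).
  have S1 : \sum_x \sum_y \sum_z tt x y z * w x ^+ 2 = 4 * \sum_x w x ^+ 2.
    rewrite mulr_sumr; apply: eq_bigr => x _.
    rewrite -(Psum x) mulr_suml; apply: eq_bigr => y _.
    rewrite -[in RHS](Ptri x y) -mulrA mulr_suml mulr_sumr; apply: eq_bigr => z _.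
    by rewrite /tt; ring.
  have S2 : \sum_x \sum_y \sum_z tt x y z * w y ^+ 2 = 4 * \sum_x w x ^+ 2.
    rewrite sum_swap12 -S1; do 3 (apply: eq_bigr => ? _).
    by rewrite /tt Psym (Psym _ _); ring.
  have S3 : \sum_x \sum_y \sum_z tt x y z * w z ^+ 2 = 4 * \sum_x w x ^+ 2.
    rewrite sum_swap23 sum_swap12 -S1; do 3 (apply: eq_bigr => ? _).
    by rewrite tt_rot.
  have X1 : \sum_x \sum_y \sum_z tt x y z * (w x * w y) =
      \sum_x \sum_y P x y * (w x * w y).
    apply: eq_bigr => x _; apply: eq_bigr => y _.
    rewrite -[in RHS](Ptri x y) -mulrA mulr_suml mulr_sumr; apply: eq_bigr => z _.
    by rewrite /tt; ring.
  have X2 : \sum_x \sum_y \sum_z tt x y z * (w y * w z) =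
      \sum_x \sum_y P x y * (w x * w y).
    rewrite sum_swap12 sum_swap23 -X1; do 3 (apply: eq_bigr => ? _).
    by rewrite [in RHS]tt_rot.
  have X3 : \sum_x \sum_y \sum_z tt x y z * (w x * w z) =
      \sum_x \sum_y P x y * (w x * w y).
    rewrite sum_swap23 -X1; do 3 (apply: eq_bigr => ? _).
    by rewrite tt_sw23.
  have -> : \sum_x \sum_y \sum_z tt x y z * (w x + w y + w z) ^+ 2 =
     (\sum_x \sum_y \sum_z tt x y z * w x ^+ 2) +
     (\sum_x \sum_y \sum_z tt x y z * w y ^+ 2) +
     (\sum_x \sum_y \sum_z tt x y z * w z ^+ 2) +
     2 * (\sum_x \sum_y \sum_z tt x y z * (w x * w y)) +
     2 * (\sum_x \sum_y \sum_z tt x y z * (w y * w z)) +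
     2 * (\sum_x \sum_y \sum_z tt x y z * (w x * w z)).
    rewrite !mulr_sumr -!big_split; apply: eq_bigr => x _.
    rewrite !mulr_sumr -!big_split; apply: eq_bigr => y _.
    rewrite !mulr_sumr -!big_split; apply: eq_bigr => z _.
    rewrite /=; ring.
  rewrite S1 S2 S3 X1 X2 X3.
  have -> : \sum_x w x * \sum_y ((((x == y) : bool)%:R * 2 + P x y) * w y) =
     2 * \sum_x w x ^+ 2 + \sum_x \sum_y P x y * (w x * w y).
    rewrite mulr_sumr -big_split; apply: eq_bigr => x _.
    rewrite /= mulr_sumr (eq_bigr (fun y => ((x == y) : bool)%:R * 2 * (w x * w y)
       + P x y * (w x * w y))); last by move=> y _; ring.
    rewrite big_split /=; congr (_ + _).
    rewrite (bigD1 x) //= eqxx /= big1 ?addr0; first by ring.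
    by move=> y /negbTE; rewrite eq_sym => -> /=; ring.
  ring.
suff : 0 <= 6 * \sum_x w x * \sum_y ((((x == y) : bool)%:R * 2 + P x y) * w y).
  by rewrite pmulr_rge0.
rewrite -H; apply: sumr_ge0 => x _; apply: sumr_ge0 => y _; apply: sumr_ge0 => z _.
apply: mulr_ge0; last exact: sqr_ge0.
by rewrite /tt /P !mulr_ge0 ?ler0n.
Qed.

Lemma a1_false (k : nat) (f : 'I_k.+1 -> T) (g : T -> 'I_k.+1) :
  cancel f g -> cancel g f -> False.
Proof.
move=> fK gK.
have sumf (G : T -> int) : \sum_(i : 'I_k.+1) G (f i) = \sum_x G x.
  by symmetry; apply: reindex; apply: onW_bij; exists g.
have finj : injective f := can_inj fK.
pose B : 'M[int]_k.+1 := \matrix_(i, j) A (f i) (f j).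
have B2E i j : (B ^+ 2) i j = A2 A (f i) (f j).
  rewrite expr2 -mulmxE mxE.
  rewrite (eq_bigr (fun l => A (f i) (f l) * A (f l) (f j))); last by move=> l _; rewrite !mxE.
  by rewrite (sumf (fun x => A (f i) x * A x (f j))).
pose Nm : 'M[int]_k.+1 := B ^+ 2 - B - 5%:R.
have NmE i j : Nm i j = ((A (f i) (f j) == -1) : bool)%:R.
  have -> : Nm i j = (B ^+ 2) i j - B i j - (5%:R : 'M[int]_k.+1) i j.
    by rewrite /Nm !mxE.
  rewrite B2E A2form /P !mxE (inj_eq finj).
  case: (eqVneq i j) => [->|ij] /=; first by rewrite Adiag /=; ring.
  by case: (Avals (f i) (f j)) => -> /=; ring.
have N2 : Nm * Nm = 1.
  apply/matrixP => i j; rewrite -mulmxE !mxE.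
  rewrite (eq_bigr (fun l => ((A (f i) (f l) == -1) : bool)%:R *
                             ((A (f l) (f j) == -1) : bool)%:R)); last by move=> l _; rewrite !NmE.
  rewrite (sumf (fun x => ((A (f i) x == -1) : bool)%:R * ((A x (f j) == -1) : bool)%:R)).
  by rewrite Nsq (inj_eq finj).
have tB1 : \tr B = 0.
  by rewrite /mxtrace big1 // => i _; rewrite mxE Adiag.
have tB2 : \tr (B ^+ 2) = 5 *+ k.+1.
  rewrite /mxtrace (eq_bigr (fun _ => 5)); first by rewrite sumr_const card_ord.
  by move=> i _; rewrite B2E A2_diag.
have tB3 : \tr (B ^+ 3) = 4 *+ k.+1.
  rewrite /mxtrace (eq_bigr (fun _ => 4)); first by rewrite sumr_const card_ord.
  move=> i _; rewrite exprS -mulmxE mxE.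
  rewrite (eq_bigr (fun l => A (f i) (f l) * A2 A (f l) (f i))); last first.
    by move=> l _; rewrite mxE B2E.
  rewrite (sumf (fun x => A (f i) x * A2 A x (f i))) -(Psum (f i)).
  apply: eq_bigr => x _; rewrite A2form /P.
  case: (eqVneq x (f i)) => [->|xi] /=; first by rewrite Adiag /=; ring.
  by rewrite (Asym x); case: (Avals (f i) x) => -> /=; ring.
have BT : B^T = B by apply/matrixP => i j; rewrite !mxE Asym.
have symh p : ((horner_mx B) p)^T = (horner_mx B) p.
  elim/poly_ind: p => [|p c IH]; first by rewrite rmorph0 trmx0.
  rewrite rmorphD rmorphM /= horner_mx_X horner_mx_C linearD /= tr_scalar_mx.
  rewrite -mulmxE trmx_mul BT IH; congr (_ + _).
  by have := comm_mx_horner p (comm_mx_refl B).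
pose nnP : {poly int} := 'X ^+ 2 - 'X - 5.
pose hP : {poly int} := (1 - nnP) * ('X - 3).
pose qP : {poly int} := 'X ^+ 2 - 3.
pose kP : {poly int} := 'X ^+ 4 - 6 * 'X ^+ 3 + 4 * 'X ^+ 2 + 28 * 'X - 37.
pose sP : {poly int} := - (6 * 'X ^+ 3) + 20 * 'X ^+ 2 + 22 * 'X - 84.
have polyid : hP * qP * hP = sP + kP * (nnP ^+ 2 - 1).
  by rewrite /hP /qP /sP /kP /nnP; ring.
have hN : (horner_mx B) nnP = Nm.
  by rewrite /nnP !rmorphB /= rmorphXn /= horner_mx_X rmorph_nat.
have hR : (horner_mx B) (nnP ^+ 2 - 1) = 0.
  by rewrite rmorphB rmorphXn rmorph1 /= hN expr2 N2 subrr.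
have trs : \tr ((horner_mx B) sP) = - 8 *+ k.+1.
  rewrite /sP rmorphB rmorph_nat rmorphD rmorphD rmorphN !rmorphM !rmorph_nat /= !horner_mx_X.
  rewrite trB trD trD trN !trMnat.
  rewrite -[(84 : 'M_k.+1)]/(1 *+ 84) trMn mxtrace1.
  rewrite tB1 tB2 tB3; lia.
pose M := (horner_mx B) hP.
pose Q := (horner_mx B) qP.
have QE j l : Q j l = ((f j == f l) : bool)%:R * 2 + P (f j) (f l).
  rewrite /Q /qP rmorphB rmorphXn /= horner_mx_X rmorph_nat.
  have -> : (B ^+ 2 - 3%:R) j l = (B ^+ 2) j l - (3%:R : 'M[int]_k.+1) j l.
    by rewrite !mxE.
  rewrite B2E A2form !mxE (inj_eq finj); ring.
have tr_ge0 : 0 <= \tr (M^T * Q * M).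
  rewrite /mxtrace; apply: sumr_ge0 => i _.
  rewrite -!mulmxE -mulmxA mxE.
  pose w x := M (g x) i.
  have := PSD w; congr (_ <= _).
  rewrite -(sumf (fun x => w x * \sum_y ((((x == y) : bool)%:R * 2 + P x y) * w y))).
  apply: eq_bigr => j _; rewrite /w fK mxE.
  congr (_ * _).
  rewrite -(sumf (fun y => (((f j == y) : bool)%:R * 2 + P (f j) y) * M (g y) i)).
  by rewrite [RHS]mxE; apply: eq_bigr => l _; rewrite fK QE.
move: tr_ge0; rewrite symh /M /Q -!rmorphM polyid rmorphD rmorphM /= hR mulr0 addr0 trs.
lia.
Qed.

End A1.

End Basics.

Unset Implicit Arguments.
Set Strict Implicit.

Theorem mainTheorem3 (T : finType) (A : T -> T -> int)
    (n r : nat) (a b c : int) :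
  signed_graph A ->
  is_SRSG A n r a b c ->
  sg_connected A ->
  ~ complete A ->
  regular A 5 ->
  net_regular A 3 ->
  (class_C1 A a b c \/ class_C4 A a b c \/ class_C5 A a b c) ->
  no_unbalanced_triangle A ->
  (sg_iso A S2_10 /\ [/\ n = 10%N, r = 5%N, a = 0, b = 0 & c = 1])
  \/ (sg_iso A S3_10 /\ [/\ n = 10%N, r = 5%N, a = 3, b = 0 & c = -2]).
Proof.
move=> sgA [cT _ _ [Hd Ha Hb Hc]] _ ncomp reg net _ notri.
have [x0 [y0 [xy0 Axy0]]] : exists x y, x != y /\ A x y = 0.
  case: (pickP (fun p : T * T => (p.1 != p.2) && (A p.1 p.2 == 0))).
    by move=> [x y] /= /andP[h1 /eqP h2]; exists x, y.
  move=> H; exfalso; apply: ncomp => x y xy; rewrite /adjacent.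
  by have := H (x, y); rewrite /= xy /= => /negbT.
have r5 : r = 5%N.
  by have := Hd x0; rewrite (A2_diag sgA reg); lia.
have b0 : b = 0.
  by rewrite -(Hb x0 (m A x0)) ?(mP sgA reg net) // (A2_neg sgA reg net notri) // (mP sgA reg net).
have He := eqn sgA reg net notri x0 Ha Hc.
have zpos : (0 < #|Z A x0|)%N.
  by apply/card_gt0P; exists y0; rewrite inE eq_sym xy0 Axy0 eqxx.
have cT' := cardZ sgA reg x0.
have : (0 < #|pos A x0|)%N by rewrite (card_pos_neg sgA reg net x0).1.
case/card_gt0P => y; rewrite inE => /eqP Hy.
have aC u v : A u v = 1 -> a = #|C A u v|%:R.
  by move=> Huv; rewrite -(Ha _ _ Huv) (A2_pos sgA reg net notri).
have CC u v : A u v = 1 -> #|C A u v| = #|C A x0 y|.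
  by move=> Huv; apply/eqP; rewrite -(eqr_nat int) -(aC _ _ Huv) -(aC _ _ Hy).
have := card_C sgA reg net Hy.
case e : #|C A x0 y| => [|[|[|[|k]]]] // _.
- left; have a0 : a = 0 by rewrite (aC _ _ Hy) e.
  have [c1 [c10 iso]] : c = 1 /\ #|T| = 10%N /\ sg_iso A S2_10.
    apply: (@a0_main T A sgA reg net notri _ c x0 Hc) => [u v Huv|].
      by rewrite (CC _ _ Huv) e.
    by move: He; rewrite a0 mulr0 add0r.
  by split=> //; split=> //; rewrite -cT.
- exfalso; have a1 : a = 1 by rewrite (aC _ _ Hy) e.
  have c0 : c = 0 by move: He; rewrite a1; nia.
  have ek : (#|T|.-1).+1 = #|T| by rewrite cT'.
  apply: (@a1_false T A sgA reg net notri _ _ #|T|.-1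
            (fun i => enum_val (cast_ord ek i))
            (fun x => cast_ord (esym ek) (enum_rank x))).
  + by move=> u v Huv; rewrite (CC _ _ Huv) e.
  + by move=> u v uv h; rewrite Hc // c0.
  + by move=> i /=; rewrite enum_valK cast_ordK.
  + by move=> x /=; rewrite cast_ordKV enum_rankK.
- exfalso; have a2 : a = 2 by rewrite (aC _ _ Hy) e.
  have [y1 [y3 [y13 A13 c1]]] := case_a2 sgA reg net notri x0
      (fun u v Huv => etrans (CC u v Huv) e).
  move: c1; rewrite Hc // => c1.
  by move: He; rewrite a2 => He; nia.
- right; have a3 : a = 3 by rewrite (aC _ _ Hy) e.
  have [c2 [c10 iso]] : c = -2 /\ #|T| = 10%N /\ sg_iso A S3_10.
    apply: (@a3_main T A sgA reg net notri _ c x0 Hc) => [u v Huv|].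
      by rewrite (CC _ _ Huv) e.
    by move: He; rewrite a3 (_ : 4 * 3 = 12) //.
  by split=> //; split=> //; rewrite -cT.
Qed.
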